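(* The action of $L$ on $V(G_{E_8})$ has exactly 15 orbits, each of size 8, and each orbit is a clique of size 8 in $G_{E_8}$; thus the orbits partition $V(G_{E_8})$ into 15 cliques of size 8.
   Context: The $E_8$ root system $\Psi_{E_8}\subset\mathbb{R}^8$ consists of the 240 vectors $\pm e_i\pm e_j$ ($1\le i<j\le 8$) and all $x\in\{\pm1\}^8$ with $\prod_i x_i=1$. $G_{E_8}$ is the graph with vertices $v_x$, $x\in\Psi_{E_8}$, where $v_x=v_{-x}$, and $v_x\sim v_y$ iff $\langle x,y\rangle=0$. Let $I=\mathrm{diag}(1,1)$, $X=\begin{pmatrix}0&1\\1&0\end{pmatrix}$, $Z=\mathrm{diag}(1,-1)$, $Y=XZ$. For $M=M_1\otimes M_2\otimes M_3$ with $M_i\in\{I,X,Y,Z\}$, $\sigma_M:v_x\mapsto v_{Mx}$ is an automorphism of $G_{E_8}$, and $L=\{\sigma_M\}\cong\mathbb{Z}_2^6$ is the resulting subgroup of $\mathrm{Aut}(G_{E_8})$. *)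

(* Defs.v *)
From HB Require Import structures.
From mathcomp Require Import all_boot all_order all_algebra.
Set Implicit Arguments. Unset Strict Implicit. Unset Printing Implicit Defensive.
Import Order.TTheory GRing.Theory Num.Theory.
Local Open Scope ring_scope.

(* Coordinates e_1,...,e_8 of R^8 are indexed by i : 'I_8 (e_{k+1} <-> k).
   All vectors involved (roots and their images under the signed permutation
   matrices M) have entries in {-1,0,1}; we encode such vectors as finite
   functions 'I_8 -> 'I_3 (entry k in 'I_3 stands for the integer k - 1),
   which gives a finite type. *)
Definition Vec := {ffun 'I_8 -> 'I_3}.

Definition toZ (x : Vec) : 'cV[int]_8 := \col_i ((x i)%:Z - 1).

(* encoding of an integer (meaningful on {-1,0,1}) *)
Definition code (z : int) : 'I_3 :=
  if z == 0 then inord 1 else if 0 < z then inord 2 else inord 0.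
Definition ofZ (v : 'cV[int]_8) : Vec := [ffun i => code (v i 0)].

Definition sgn (b : bool) : int := if b then -1 else 1.
Definition evec (i : 'I_8) : 'cV[int]_8 := \col_k (k == i)%:R.

Definition E8root (x : Vec) : bool :=
  [exists i : 'I_8, exists j : 'I_8, exists s : bool, exists t : bool,
     (i < j)%N && (toZ x == sgn s *: evec i + sgn t *: evec j)]
  || ([forall i, toZ x i 0 != 0] && (\prod_i toZ x i 0 == 1)).

Definition inner (x y : Vec) : int := \sum_i toZ x i 0 * toZ y i 0.

Definition negv (x : Vec) : Vec := ofZ (- toZ x).

(* vertices of G_E8: v_x = v_{-x} is represented by the set {x, -x} *)
Definition E8vertices : {set {set Vec}} :=
  [set [set x; negv x] | x in [set x | E8root x]].

(* adjacency: v_x ~ v_y iff <x,y> = 0 (independent of the representatives) *)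
Definition E8adj (u v : {set Vec}) : bool :=
  [exists x in u, exists y in v, inner x y == 0].

Definition PI : 'M[int]_2 := 1%:M.
Definition PX : 'M[int]_2 := \matrix_(i, j) (i != j)%:R.
Definition PZ : 'M[int]_2 := \matrix_(i, j) (if i == j then (if i == 0 then 1 else -1) else 0).
Definition PY : 'M[int]_2 := PX *m PZ.

Definition pauli (k : 'I_4) : 'M[int]_2 :=
  match val k with 0 => PI | 1 => PX | 2 => PY | _ => PZ end.

Definition bit (n : nat) (i : 'I_8) : 'I_2 := inord (odd (i %/ 2 ^ n)).

(* Kronecker product M1 (x) M2 (x) M3 (standard row-major index convention) *)
Definition kron3 (A B C : 'M[int]_2) : 'M[int]_8 :=
  \matrix_(i, j) (A (bit 2 i) (bit 2 j) * B (bit 1 i) (bit 1 j) * C (bit 0 i) (bit 0 j)).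

(* L is indexed by (M1, M2, M3) in {I,X,Y,Z}^3 *)
Definition Lidx := ('I_4 * 'I_4 * 'I_4)%type.
Definition Lmat (g : Lidx) : 'M[int]_8 :=
  kron3 (pauli g.1.1) (pauli g.1.2) (pauli g.2).

Definition actv (g : Lidx) (x : Vec) : Vec := ofZ (Lmat g *m toZ x).
Definition sigma (g : Lidx) (v : {set Vec}) : {set Vec} := actv g @: v.

Definition Lorbit (v : {set Vec}) : {set {set Vec}} := [set sigma g v | g : Lidx].

Definition is_clique (O : {set {set Vec}}) : bool :=
  [forall u in O, forall v in O, (u != v) ==> E8adj u v].

(* Main.v *)
Require Import Defs.
From mathcomp Require Import all_boot all_order all_algebra.
Set Implicit Arguments. Unset Strict Implicit. Unset Printing Implicit Defensive.
Import Order.TTheory GRing.Theory Num.Theory.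
Local Open Scope ring_scope.

Definition zs : seq int := [:: -1; 0; 1].
Definition wf (v : seq int) : bool := (size v == 8%N) && all (fun z => z \in zs) v.
Fixpoint allc (n : nat) : seq (seq int) :=
  if n is n'.+1 then [seq a :: t | a <- zs, t <- allc n'] else [:: [::]].
Definition clampc (z : int) : int := if z == 0 then 0 else if 0 < z then 1 else -1.
Definition negc (v : seq int) : seq int := map (fun z => - z) v.
Definition bitn (n m : nat) : nat := odd (m %/ 2 ^ n).
Definition pc (a u v : nat) : int :=
  match a with
  | 0%N => (u == v)%:R
  | 1%N => (u != v)%:R
  | 2%N => (u != v)%:R * (if v == 0%N then 1 else -1)
  | _ => if u == v then (if u == 0%N then 1 else -1) else 0
  end.
Definition Kc (g : nat * nat * nat) (m k : nat) : int :=
  pc g.1.1 (bitn 2 m) (bitn 2 k) * pc g.1.2 (bitn 1 m) (bitn 1 k) * pc g.2 (bitn 0 m) (bitn 0 k).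
Definition sumc (f : nat -> int) : int := foldr (fun j acc => f j + acc) 0 (iota 0 8).
Definition actc g (v : seq int) : seq int :=
  [seq clampc (sumc (fun k => Kc g m k * nth 0 v k)) | m <- iota 0 8].
Definition dotc (v w : seq int) : int := sumc (fun k => nth 0 v k * nth 0 w k).
Definition prodc (v : seq int) : int := foldr (fun z acc => z * acc) 1 v.
Definition gl : seq (nat * nat * nat) :=
  [seq (p, c) | p <- [seq (a, b) | a <- iota 0 4, b <- iota 0 4], c <- iota 0 4].
Definition sgn' (b : bool) : int := if b then -1 else 1.
Definition mk1c (i j : nat) (s t : bool) : seq int :=
  [seq sgn s * (k == i)%:R + sgn t * (k == j)%:R | k <- iota 0 8].
Definition bs := [:: true; false].
Definition isroot_c (v : seq int) : bool :=
  if count (fun z => z == 0) v == 6%N then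
  has (fun i => has (fun j => (i < j)%N && has (fun s => has (fun t => v == mk1c i j s t) bs) bs)
     (iota 0 8)) (iota 0 8)
  else (all (fun z => z != 0) v && (prodc v == 1)).
Definition W : seq (seq int) := filter isroot_c (allc 8).
Definition bitb (n m : nat) : bool := odd (m %/ 2 ^ n).
Definition flip (a : nat) : bool := (a == 1%N) || (a == 2%N).
Definition pm (t : nat * nat * nat) (m : nat) : nat :=
  (4 * (bitb 2 m (+) flip t.1.1) + 2 * (bitb 1 m (+) flip t.1.2) + (bitb 0 m (+) flip t.2))%N.
Definition sgf (a : nat) (u : bool) : int :=
  match a with 2%N => if u then 1 else -1 | 3%N => if u then -1 else 1 | _ => 1 end.
Definition sg (t : nat * nat * nat) (m : nat) : int :=
  sgf t.1.1 (bitb 2 m) * sgf t.1.2 (bitb 1 m) * sgf t.2 (bitb 0 m).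
Definition actc' t (v : seq int) : seq int := [seq sg t m * nth 0 v (pm t m) | m <- iota 0 8].
Definition eqi (x y : int) : bool :=
  match x, y with Posz a, Posz b => eqn a b | Negz a, Negz b => eqn a b | _, _ => false end.
Fixpoint eqs (a b : seq int) : bool := match a, b with
 | x :: a', y :: b' => if eqi x y then eqs a' b' else false | [::], [::] => true | _, _ => false end.
Fixpoint memz (a : seq int) (l : seq (seq int)) : bool :=
  if l is b :: l' then (if eqs a b then true else memz a l') else false.
Fixpoint undupz (l : seq (seq int)) : seq (seq int) :=
  if l is a :: l' then (if memz a l' then undupz l' else a :: undupz l') else [::].
Definition orbc (v : seq int) : seq (seq int) :=
  undupz (flatten [seq [:: actc' t v; negc (actc' t v)] | t <- gl]).
Definition subl (a b : seq (seq int)) := all (fun u => memz u b) a.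
Definition WO : seq (seq int * seq (seq int)) := [seq (v, orbc v) | v <- W].
Definition repsc : seq (seq int) :=
  map fst (foldl (fun acc p => if has (fun q => memz p.1 q.2) acc then acc else rcons acc p) [::] WO).
Definition repO : seq (seq int * seq (seq int)) := [seq (w, orbc w) | w <- repsc].
Definition selc (l : seq (seq int)) : seq (seq int) :=
  foldl (fun acc u => if memz u acc || memz (negc u) acc then acc else rcons acc u) [::] l.

Definition check0 : bool :=
  all (fun t => all (fun m => (pm t m < 8)%N && ((sg t m == 1) || (sg t m == -1)) &&
     all (fun k => Kc t m k == (if k == pm t m then sg t m else 0)) (iota 0 8)) (iota 0 8)) gl.
Definition check1 : bool :=
  all (fun p => (actc' (0,0,0)%N p.1 == p.1) && subl p.2 W &&
     all (fun t => actc' t (negc p.1) == negc (actc' t p.1)) gl) WO.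
Definition check2 : bool :=
  (size repsc == 15%N) && uniq repsc && all wf repsc && subl repsc W &&
  all (fun p1 => all (fun p2 => (p1.1 == p2.1) ||
     all (fun u => ~~ memz u p2.2 && ~~ memz (negc u) p2.2) p1.2) repO) repO.
Definition check3 : bool :=
  all (fun p => let q := nth ([::], [::]) repO (find (fun q => memz p.1 q.2) repO) in
     subl p.2 q.2 && subl q.2 p.2) WO.
Definition check4 : bool :=
  all (fun p => let S := selc p.2 in
     (size S == 8%N) && uniq S && all wf S && subl S p.2 &&
     all (fun u => memz u S || memz (negc u) S) p.2 &&
     all (fun s => all (fun t => (s != negc t) && ((s == t) || (dotc s t == 0))) S) S) repO.
Definition check5 : bool :=
  all (fun i => all (fun j => (i < j)%N ==> all (fun s => all (fun t =>
     count (fun z => z == 0) (mk1c i j s t) == 6%N) bs) bs) (iota 0 8)) (iota 0 8).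
Lemma c5 : check5 = true. Proof. vm_compute. reflexivity. Qed.

Lemma eqi_eq x y : eqi x y = (x == y).
Proof. by case: x => a; case: y => b //=; rewrite -[LHS]/(a == b). Qed.
Lemma eqs_eq a b : eqs a b = (a == b).
Proof.
elim: a b => [|x a IH] [|y b] //=; rewrite eqi_eq eqseq_cons IH.
by case: (x == y).
Qed.
Lemma memz_in a l : memz a l = (a \in l).
Proof. elim: l => [|b l IH] //=; rewrite in_cons eqs_eq IH; by case: (a == b). Qed.
Lemma undupz_mem l : undupz l =i l.
Proof.
elim: l => [|a l IH] u //=; rewrite memz_in; case: ifP => H.
  by rewrite IH in_cons; case: eqP => // ->; rewrite H.
by rewrite !in_cons IH.
Qed.

Lemma toZE x i : toZ x i 0 = (x i)%:Z - 1.
Proof. by rewrite /toZ mxE. Qed.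

Definition Phi (x : Vec) : seq int := [seq toZ x (inord k) 0 | k <- iota 0 8].
Lemma size_Phi x : size (Phi x) = 8%N. Proof. by rewrite size_map size_iota. Qed.
Lemma nth_Phi x k : (k < 8)%N -> nth 0 (Phi x) k = toZ x (inord k) 0.
Proof. by move=> Hk; rewrite (nth_map 0%N) ?size_iota // nth_iota. Qed.
Lemma nth_Phi' x (i : 'I_8) : nth 0 (Phi x) i = toZ x i 0.
Proof. by rewrite nth_Phi // inord_val. Qed.

Lemma toZ_zs x i : toZ x i 0 \in zs.
Proof. rewrite toZE; case: (x i) => [[|[|[|n]]] Hn] //. Qed.

Lemma Phi_wf x : wf (Phi x).
Proof.
rewrite /wf size_Phi eqxx andTb; apply/allP => z /mapP [k _ ->]; exact: toZ_zs.
Qed.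

Lemma Phi_inj : injective Phi.
Proof.
move=> x y E; apply/ffunP => i.
have := congr1 (fun s => nth 0 s i) E; rewrite /= !nth_Phi' !toZE => /addIr /eqP.
by rewrite eqz_nat => /eqP /val_inj.
Qed.
Lemma code_clamp z : (code z : nat)%:Z - 1 = clampc z.
Proof.
rewrite /code /clampc; case: ifP => _; first by rewrite inordK.
by case: ifP => _; rewrite inordK.
Qed.
Lemma clampc_id z : z \in zs -> clampc z = z.
Proof. by rewrite !inE => /or3P [] /eqP ->. Qed.

Definition dec (v : seq int) : Vec := [ffun i : 'I_8 => code (nth 0 v i)].
Lemma Phi_dec v : wf v -> Phi (dec v) = v.
Proof.
case/andP => /eqP Hs /allP Ha.
rewrite /Phi -[RHS](mkseq_nth 0) Hs /mkseq; apply/eq_in_map => k; rewrite mem_iota /= => Hk.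
rewrite toZE ffunE code_clamp inordK // clampc_id //; apply: Ha; apply: mem_nth; by rewrite Hs.
Qed.

Lemma Phi_negv x : Phi (negv x) = negc (Phi x).
Proof.
rewrite /negc /Phi -map_comp; apply/eq_in_map => k _ /=.
rewrite toZE /negv /ofZ ffunE code_clamp mxE clampc_id //.
move: (toZ_zs x (inord k)); rewrite !inE => /or3P [] /eqP -> //.
Qed.

Lemma negcK v : negc (negc v) = v.
Proof. by rewrite /negc -map_comp; apply: map_id_in => z _ /=; rewrite opprK. Qed.
Lemma negvK x : negv (negv x) = x.
Proof. by apply: Phi_inj; rewrite !Phi_negv negcK. Qed.
Lemma big_foldr_sum (s : seq nat) (G : nat -> int) :
  \sum_(k <- s) G k = foldr (fun j acc => G j + acc) 0 s.
Proof. by elim: s => [|a s IH]; rewrite ?big_nil ?big_cons ?IH. Qed.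
Lemma big_foldr_prod (s : seq nat) (G : nat -> int) :
  \prod_(k <- s) G k = foldr (fun j acc => G j * acc) 1 s.
Proof. by elim: s => [|a s IH]; rewrite ?big_nil ?big_cons ?IH. Qed.

Lemma sum8 (F : 'I_8 -> int) : \sum_(i < 8) F i = sumc (fun k => F (inord k)).
Proof.
rewrite (eq_bigr (fun i : 'I_8 => F (inord i))); last by move=> i _; rewrite inord_val.
by rewrite -(big_mkord xpredT (fun k => F (inord k))) big_foldr_sum.
Qed.
Lemma prod8 (F : 'I_8 -> int) :
  \prod_(i < 8) F i = foldr (fun j acc => F (inord j) * acc) 1 (iota 0 8).
Proof.
rewrite (eq_bigr (fun i : 'I_8 => F (inord i))); last by move=> i _; rewrite inord_val.
by rewrite -(big_mkord xpredT (fun k => F (inord k))) big_foldr_prod.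
Qed.
Lemma foldr_ext (s : seq nat) (f f' : nat -> int) :
  (forall k, k \in s -> f k = f' k) ->
  foldr (fun j acc => f j + acc) 0 s = foldr (fun j acc => f' j + acc) 0 s.
Proof.
elim: s => [|a s IH] H //=; rewrite H ?mem_head // IH // => k Hk; apply: H.
by rewrite in_cons Hk orbT.
Qed.
Lemma sumc_ext (f f' : nat -> int) :
  (forall k, (k < 8)%N -> f k = f' k) -> sumc f = sumc f'.
Proof. move=> H; apply: foldr_ext => k; rewrite mem_iota; exact: H. Qed.
Lemma sumc_delta (p : nat) (s : int) (f : nat -> int) : (p < 8)%N ->
  sumc (fun k => (if k == p then s else 0) * f k) = s * f p.
Proof.
move=> Hp; rewrite /sumc -big_foldr_sum.
rewrite (bigD1_seq p) ?mem_iota ?iota_uniq //= eqxx.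
rewrite big1_seq ?addr0 // => k /andP [Hk _]; by rewrite (negbTE Hk) mul0r.
Qed.

Lemma inner_dot x y : inner x y = dotc (Phi x) (Phi y).
Proof.
rewrite /inner sum8 /dotc; apply: sumc_ext => k Hk; by rewrite !nth_Phi.
Qed.
Lemma pauli_pc (k : 'I_4) (u v : 'I_2) : pauli k u v = pc k u v.
Proof.
case: k => [[|[|[|[|k]]]] Hk] //; case: u => [[|[|u]] Hu] //; case: v => [[|[|v]] Hv] //;
rewrite /pauli /= ?/PI ?/PX ?/PY ?/PZ !mxE //= ?big_ord_recl ?big_ord0 !mxE //=.
Qed.

Lemma bit_val n m : (m < 8)%N -> nat_of_ord (bit n (inord m : 'I_8)) = bitn n m.
Proof. by move=> Hm; rewrite /bit inordK // inordK //; case: odd. Qed.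

Definition gnat (g : Lidx) : nat * nat * nat := (nat_of_ord g.1.1, nat_of_ord g.1.2, nat_of_ord g.2).

Lemma Lmat_entry g m k : (m < 8)%N -> (k < 8)%N ->
  Lmat g (inord m) (inord k) = Kc (gnat g) m k.
Proof.
move=> Hm Hk; rewrite /Lmat /kron3 mxE !pauli_pc !bit_val //.
Qed.

Definition actc_ok := check0.
Lemma Phi_actv g x : Phi (actv g x) = actc (gnat g) (Phi x).
Proof.
rewrite /Phi /actc; apply/eq_in_map => m; rewrite mem_iota /= => Hm.
rewrite toZE /actv /ofZ ffunE code_clamp mxE sum8; congr clampc.
apply: sumc_ext => k Hk; by rewrite Lmat_entry // nth_Phi.
Qed.
Lemma c0 : check0 = true. Proof. vm_compute. reflexivity. Qed.

Lemma actc_eq t v : t \in gl -> wf v -> actc t v = actc' t v.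
Proof.
move=> Ht /andP [/eqP Hs /allP Ha].
have /allP /(_ t Ht) /allP H0 := c0.
apply/eq_in_map => m Hm; have /andP [/andP [Hp Hsg] /allP HK] := H0 m Hm.
rewrite mem_iota /= in Hm.
rewrite (sumc_ext (f' := fun k => (if k == pm t m then sg t m else 0) * nth 0 v k)); last first.
  by move=> k Hk; rewrite (eqP (HK k _)) // mem_iota.
rewrite sumc_delta //.
have : nth 0 v (pm t m) \in zs by apply: Ha; apply: mem_nth; rewrite Hs.
by case/orP: Hsg => /eqP ->; rewrite !inE => /or3P [] /eqP -> //.
Qed.

Lemma gnat_gl g : gnat g \in gl.
Proof.
rewrite /gnat /gl; apply/allpairsP; exists ((nat_of_ord g.1.1, nat_of_ord g.1.2), nat_of_ord g.2).
split; [|by rewrite mem_iota /= ltn_ord|by []].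
apply/allpairsP; exists (nat_of_ord g.1.1, nat_of_ord g.1.2); split; [|by rewrite mem_iota /= ltn_ord|by []].
by rewrite mem_iota /= ltn_ord.
Qed.

Lemma glP t : t \in gl -> exists g, t = gnat g.
Proof.
rewrite /gl => /allpairsP [[p c] [Hp Hc ->]].
move: Hp => /allpairsP [[a b] [Ha Hb Hab]]; rewrite /= in Hab; subst p.
rewrite !mem_iota /= in Ha Hb Hc.
exists (inord a, inord b, inord c); by rewrite /gnat /= !inordK.
Qed.

Lemma Phi_actv' g x : Phi (actv g x) = actc' (gnat g) (Phi x).
Proof. by rewrite Phi_actv actc_eq ?gnat_gl ?Phi_wf. Qed.

Lemma orbcP u v :
  reflect (exists2 t, t \in gl & (u = actc' t v \/ u = negc (actc' t v))) (u \in orbc v).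
Proof.
rewrite /orbc undupz_mem; apply: (iffP flatten_mapP) => [[t Ht]|[t Ht H]].
  by rewrite !inE => /orP [] /eqP ->; exists t => //; [left|right].
by exists t => //; rewrite !inE; case: H => ->; rewrite eqxx ?orbT.
Qed.

Lemma toZ_eqE x (M : 'cV[int]_8) :
  (toZ x == M) = (Phi x == [seq M (inord k) 0 | k <- iota 0 8]).
Proof.
apply/eqP/eqP => [<- //| E]; apply/matrixP => i j; rewrite (ord1 j).
rewrite -nth_Phi' E.
by rewrite (nth_map 0%N) ?size_iota // nth_iota // add0n inord_val.
Qed.

Lemma mk1E (i j : 'I_8) s t :
  [seq (sgn s *: evec i + sgn t *: evec j) (inord k) 0 | k <- iota 0 8] = mk1c i j s t.
Proof.
apply/eq_in_map => k; rewrite mem_iota /= => Hk.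
by rewrite !mxE -!(inj_eq val_inj) /= !inordK.
Qed.

Definition Hc (v : seq int) : bool :=
  has (fun i => has (fun j => (i < j)%N && has (fun s => has (fun t => v == mk1c i j s t) bs) bs)
     (iota 0 8)) (iota 0 8).

Lemma D1E x :
  [exists i : 'I_8, exists j : 'I_8, exists s : bool, exists t : bool,
     (i < j)%N && (toZ x == sgn s *: evec i + sgn t *: evec j)] = Hc (Phi x).
Proof.
apply/existsP/hasP.
  move=> [i /existsP [j /existsP [s /existsP [t /andP [ij]]]]].
  rewrite toZ_eqE mk1E => E.
  exists (nat_of_ord i); first by rewrite mem_iota /=.
  cbv beta; apply/hasP; exists (nat_of_ord j); first by rewrite mem_iota /=.
  cbv beta; rewrite ij andTb; apply/hasP; exists s; first by case: s {E}.
  by cbv beta; apply/hasP; exists t; first by case: t {E}.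
move=> [i Hi /hasP [j Hj /andP [ij /hasP [s _ /hasP [t _ E]]]]].
rewrite mem_iota add0n in Hi; rewrite mem_iota add0n in Hj.
exists (inord i); apply/existsP; exists (inord j); apply/existsP; exists s; apply/existsP; exists t.
by rewrite !inordK // ij /= toZ_eqE mk1E !inordK.
Qed.

Lemma D2E x :
  [forall i : 'I_8, toZ x i 0 != 0] && (\prod_(i < 8) toZ x i 0 == 1) =
  all (fun z => z != 0) (Phi x) && (prodc (Phi x) == 1).
Proof.
congr andb.
  apply/forallP/allP => [H z /mapP [k _ ->] | H i]; first exact: H.
  by apply: H; rewrite -nth_Phi'; apply: mem_nth; rewrite size_Phi.
by rewrite prod8 /prodc /Phi foldr_map.
Qed.

Lemma Hc_count (v : seq int) : Hc v -> count (fun z => z == 0) v = 6%N.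
Proof.
move=> /hasP [i Hi /hasP [j Hj /andP [ij /hasP [s Hs /hasP [t Ht /eqP ->]]]]].
have := c5; rewrite /check5 => /allP /(_ i Hi) /allP /(_ j Hj); rewrite ij implyTb.
by move=> /allP /(_ s Hs) /allP /(_ t Ht) /eqP.
Qed.

Lemma all_count0 (v : seq int) : all (fun z => z != 0) v -> count (fun z => z == 0) v = 0%N.
Proof.
elim: v => [|z v IH] //= /andP [Hz Hv]; rewrite (IH Hv) addn0.
by move: Hz; case: (z == 0).
Qed.

Lemma E8root_c x : E8root x = isroot_c (Phi x).
Proof.
rewrite /E8root D1E D2E /isroot_c -/(Hc (Phi x)).
case Ec: (count _ (Phi x) == 6%N).
  case Ha: (all _ (Phi x)); last by rewrite andFb orbF.
  by move/eqP: Ec; rewrite (all_count0 Ha).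
case H: (Hc (Phi x)) => //.
by move/eqP: Ec; rewrite (Hc_count H).
Qed.

Lemma allc_mem n (v : seq int) : size v = n -> all (fun z => z \in zs) v -> v \in allc n.
Proof.
elim: n v => [|n IH] [|a v] // [Hs] /andP [Ha Hv].
change (a :: v \in [seq a :: t | a <- zs, t <- allc n]).
apply/allpairsP; exists (a, v); split => //; exact: IH.
Qed.

Lemma inW x : E8root x = (Phi x \in W).
Proof.
rewrite /W mem_filter E8root_c.
have /andP [/eqP Hs Ha] := Phi_wf x.
by rewrite allc_mem ?andbT.
Qed.

Lemma c1 : check1 = true. Proof. vm_compute. reflexivity. Qed.
Lemma c2 : check2 = true. Proof. vm_compute. reflexivity. Qed.
Lemma c3 : check3 = true. Proof. vm_compute. reflexivity. Qed.
Lemma c4 : check4 = true. Proof. vm_compute. reflexivity. Qed.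

Lemma inWO v : v \in W -> (v, orbc v) \in WO.
Proof. move=> H; exact: (map_f (fun v => (v, orbc v)) H). Qed.

Lemma ch1 v : v \in W ->
  [/\ actc' (0,0,0)%N v = v, subl (orbc v) W &
      forall t, t \in gl -> actc' t (negc v) = negc (actc' t v)].
Proof.
move=> /inWO H; have /allP /(_ (v, orbc v) H) /andP := c1; move=> [/andP [/eqP H1 H2] /allP H3].
by split => // t /H3 /eqP.
Qed.

Lemma sublP a b : subl a b -> forall u, u \in a -> u \in b.
Proof. by move=> /allP H u /H; rewrite memz_in. Qed.

Definition vpair (x : Vec) : {set Vec} := [set x; negv x].
Lemma vpair_neg x : vpair (negv x) = vpair x.
Proof. by apply/setP => z; rewrite !inE negvK orbC. Qed.
Lemma vpair_eq y z : vpair y = vpair z -> z = y \/ z = negv y.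
Proof.
move=> E; have : z \in vpair z by rewrite !inE eqxx.
by rewrite -E !inE => /orP [] /eqP; [left|right].
Qed.
Lemma vpair_self x : x \in vpair x. Proof. by rewrite !inE eqxx. Qed.

Lemma actv_neg g x : Phi x \in W -> actv g (negv x) = negv (actv g x).
Proof.
move=> /ch1 [_ _ H]; apply: Phi_inj.
by rewrite Phi_negv !Phi_actv' Phi_negv H ?gnat_gl.
Qed.

Lemma sigma_pair g x : Phi x \in W -> sigma g (vpair x) = vpair (actv g x).
Proof. by move=> H; rewrite /sigma /vpair imsetU1 imset_set1 actv_neg. Qed.

Definition g0 : Lidx := (ord0, ord0, ord0).
Lemma actv_id x : Phi x \in W -> actv g0 x = x.
Proof. move=> H; apply: Phi_inj; rewrite Phi_actv'; by case: (ch1 H). Qed.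

Lemma self_orbc v : v \in W -> v \in orbc v.
Proof.
move=> H; apply/orbcP; exists (0,0,0)%N; first exact: (gnat_gl g0).
by left; case: (ch1 H).
Qed.

Lemma memO x u : Phi x \in W ->
  u \in Lorbit (vpair x) <-> exists z, u = vpair z /\ Phi z \in orbc (Phi x).
Proof.
move=> HW; split.
  case/imsetP => g _ ->; rewrite sigma_pair //; exists (actv g x); split => //.
  by apply/orbcP; exists (gnat g); [exact: gnat_gl | left; rewrite Phi_actv'].
move=> [z [-> /orbcP [t /glP [g ->] [] E]]].
  have -> : z = actv g x by apply: Phi_inj; rewrite Phi_actv'.
  by rewrite -sigma_pair //; apply: imset_f.
have -> : z = negv (actv g x) by apply: Phi_inj; rewrite Phi_negv Phi_actv'.
by rewrite vpair_neg -sigma_pair //; apply: imset_f.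
Qed.

Opaque W repsc orbc WO allc.
Lemma map_pair_mem (s : seq (seq int)) w : w \in s -> (w, orbc w) \in [seq (w, orbc w) | w <- s].
Proof. by move=> H; apply: (map_f (fun w => (w, orbc w)) H). Qed.
Lemma inrepO w : w \in repsc -> (w, orbc w) \in repO.
Proof. exact: map_pair_mem. Qed.

Lemma ch2 : [/\ size repsc = 15%N, uniq repsc, all wf repsc, subl repsc W &
  forall w1 w2, w1 \in repsc -> w2 \in repsc -> w1 != w2 -> forall u, u \in orbc w1 ->
     (u \notin orbc w2) && (negc u \notin orbc w2)].
Proof.
have := c2; rewrite /check2 => /andP [/andP [/andP [/andP [/eqP H1 H2] H3] H4] /allP H5].
split; [exact: H1|exact: H2|exact: H3|exact: H4|] => w1 w2 Hw1 Hw2 Hne u Hu.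
have /H5 /allP /(_ (w2, orbc w2)) := inrepO Hw1.
move=> /(_ (inrepO Hw2)) /orP []; first by move=> E; case/negP: Hne; exact: E.
by move=> /allP /(_ u Hu); rewrite !memz_in.
Qed.

Lemma rep_W w : w \in repsc -> w \in W.
Proof. case: ch2 => _ _ _ H _; exact: sublP H w. Qed.
Lemma rep_wf w : w \in repsc -> wf w.
Proof. case: ch2 => _ _ /allP H _ _; exact: H. Qed.
Lemma Phi_dec_rep w : w \in repsc -> Phi (dec w) = w.
Proof. by move=> /rep_wf /Phi_dec. Qed.
Lemma rep_W' w : w \in repsc -> Phi (dec w) \in W.
Proof. move=> H; rewrite (Phi_dec_rep H). exact: rep_W H. Qed.

Lemma O_eq x y : Phi x \in W -> Phi y \in W -> orbc (Phi x) =i orbc (Phi y) ->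
  Lorbit (vpair x) = Lorbit (vpair y).
Proof.
move=> Hx Hy E; apply/setP => u; apply/idP/idP.
  by move/(memO _ Hx) => [z [-> Hz]]; apply/(memO _ Hy); exists z; rewrite -E.
by move/(memO _ Hy) => [z [-> Hz]]; apply/(memO _ Hx); exists z; rewrite E.
Qed.

Lemma O_rep x : Phi x \in W -> exists2 w, w \in repsc & Lorbit (vpair x) = Lorbit (vpair (dec w)).
Proof.
move=> Hx; have := c3; rewrite /check3 => /allP /(_ _ (inWO Hx)).
move=> /andP [S1 S2].
set q := nth _ _ _ in S1 S2.
have Hq : q \in repO.
  apply: mem_nth; rewrite ltnNge; apply/negP => Hge.
  move: S1; rewrite /q (nth_default _ Hge) => /sublP /(_ _ (self_orbc Hx)).
  by rewrite in_nil.
move: Hq; rewrite /repO => /mapP [w Hw Eq].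
exists w; first exact: Hw.
apply: O_eq; [exact: Hx|exact: rep_W' Hw|].
rewrite (Phi_dec_rep Hw) => u; apply/idP/idP => Hu.
  by move: (sublP S1 Hu); rewrite Eq.
by apply: (sublP S2); rewrite Eq.
Qed.

Lemma inter_rep w1 w2 u : w1 \in repsc -> w2 \in repsc ->
  u \in Lorbit (vpair (dec w1)) -> u \in Lorbit (vpair (dec w2)) -> w1 = w2.
Proof.
move=> H1 H2 /(memO _ (rep_W' H1)) [z1 [-> Hz1]] /(memO _ (rep_W' H2)) [z2 [E Hz2]].
rewrite (Phi_dec_rep H1) in Hz1; rewrite (Phi_dec_rep H2) in Hz2.
apply/eqP; apply/negPn/negP => Hne.
case: ch2 => _ _ _ _ /(_ w1 w2 H1 H2 Hne _ Hz1) /andP [N1 N2].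
case: (vpair_eq E) => Ez; subst z2; first by rewrite Hz2 in N1.
by rewrite Phi_negv in Hz2; rewrite Hz2 in N2.
Qed.

Lemma Lorbit_self x : Phi x \in W -> vpair x \in Lorbit (vpair x).
Proof. by move=> Hx; apply/(memO _ Hx); exists x; split => //; apply: self_orbc. Qed.

Lemma ch4 w : w \in repsc ->
  let S := selc (orbc w) in
  [/\ size S = 8%N /\ uniq S, all wf S, subl S (orbc w),
      forall u, u \in orbc w -> (u \in S) || (negc u \in S) &
      forall s t, s \in S -> t \in S -> (s != negc t) && ((s == t) || (dotc s t == 0))].
Proof.
move=> Hw S; have := c4; rewrite /check4 => /allP.
move=> /(_ _ (inrepO Hw)).
move=> /andP [/andP [/andP [/andP [/andP [/eqP H1 H2] H3] H4] /allP H5] /allP H6].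
split; [by split; [exact: H1|exact: H2]|exact: H3|exact: H4| |].
  by move=> u /H5; rewrite !memz_in.
by move=> s t /H6 /allP /(_ t).
Qed.

Lemma Oset w : w \in repsc ->
  Lorbit (vpair (dec w)) = [set vpair y | y in map dec (selc (orbc w))].
Proof.
move=> Hw; case: (ch4 Hw) => _ /allP Hwf HS Hcov _.
apply/setP => u; apply/idP/idP.
  move/(memO _ (rep_W' Hw)) => [z [-> Hz]]; rewrite (Phi_dec_rep Hw) in Hz.
  case/orP: (Hcov _ Hz) => Hin.
    have -> : z = dec (Phi z) by apply: Phi_inj; rewrite (Phi_dec (Phi_wf z)).
    by apply: imset_f; apply: map_f.
  have -> : vpair z = vpair (dec (negc (Phi z))).
    rewrite -Phi_negv; have -> : dec (Phi (negv z)) = negv z.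
      by apply: Phi_inj; rewrite (Phi_dec (Phi_wf _)).
    by rewrite vpair_neg.
  by apply: imset_f; apply: map_f.
case/imsetP => y /mapP [s Hs ->] ->.
apply/(memO _ (rep_W' Hw)); exists (dec s); split; first by [].
by rewrite (Phi_dec_rep Hw) (Phi_dec (Hwf s Hs)); apply: (sublP HS).
Qed.

Lemma Oprops w : w \in repsc ->
  #|Lorbit (vpair (dec w))| = 8%N /\ is_clique (Lorbit (vpair (dec w))).
Proof.
move=> Hw; rewrite (Oset Hw); case: (ch4 Hw) => [[Hsz Huq] /allP Hwf _ _ Hpw].
have decinj : {in selc (orbc w) &, injective dec}.
  by move=> s t Hs Ht E; rewrite -(Phi_dec (Hwf s Hs)) -(Phi_dec (Hwf t Ht)) E.
split.
  rewrite card_in_imset.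
    have Hu2 : uniq (map dec (selc (orbc w))) by rewrite (map_inj_in_uniq decinj).
    by move/card_uniqP: Hu2 => ->; rewrite size_map.
  move=> y1 y2 /mapP [s Hs ->] /mapP [t Ht ->] E.
  case: (vpair_eq E) => E2; first by rewrite E2.
  have := Hpw _ _ Ht Hs; rewrite -(Phi_dec (Hwf t Ht)) E2 Phi_negv (Phi_dec (Hwf s Hs)).
  by rewrite eqxx.
apply/forallP => u; apply/implyP => /imsetP [y1 /mapP [s Hs ->] ->].
apply/forallP => v; apply/implyP => /imsetP [y2 /mapP [t Ht ->] ->].
apply/implyP => Hne.
have Hst : s != t by apply: contraNneq Hne => ->.
apply/existsP; exists (dec s); rewrite vpair_self /=.
apply/existsP; exists (dec t); rewrite vpair_self /= inner_dot.
rewrite (Phi_dec (Hwf s Hs)) (Phi_dec (Hwf t Ht)).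
by case/andP: (Hpw _ _ Hs Ht) => _; rewrite (negbTE Hst).
Qed.

Lemma card_imset_seq (T U : finType) (f : T -> U) (s : seq T) :
  uniq s -> {in s &, injective f} -> #|[set f y | y in s]| = size s.
Proof. by move=> Hu Hi; rewrite card_in_imset //; apply/card_uniqP. Qed.

Local Close Scope ring_scope.

Theorem lemma3p4 :
  let orbits := [set Lorbit v | v in E8vertices] in
  [/\ #|orbits| = 15,
      forall O : {set {set Vec}}, O \in orbits -> #|O| = 8 /\ is_clique O
    & partition orbits E8vertices].
Proof.
move=> orbits.
have Hor : orbits = [set Lorbit (vpair y) | y in map dec repsc].
  apply/setP => o; apply/imsetP/imsetP.
    move=> [v /imsetP [x Hx ->] ->]; rewrite inE inW in Hx.
    case: (O_rep Hx) => w Hw E; exists (dec w); [exact: map_f | exact: E].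
  move=> [y /mapP [w Hw ->] ->]; exists (vpair (dec w)); last by [].
  by apply/imsetP; exists (dec w); [rewrite inE inW; exact: rep_W' Hw | by []].
case: ch2 => Hsz Huq _ _ _.
split.
- have decinj : {in repsc &, injective dec}.
    by move=> s t Hs Ht E; rewrite -(Phi_dec_rep Hs) -(Phi_dec_rep Ht) E.
  have Hu2 : uniq (map dec repsc) by rewrite (map_inj_in_uniq decinj).
  have Hinj : {in map dec repsc &, injective (fun y => Lorbit (vpair y))}.
    move=> y1 y2 /mapP [w1 H1 ->] /mapP [w2 H2 ->] E.
    have Hu : vpair (dec w2) \in Lorbit (vpair (dec w1)) by rewrite E; exact: Lorbit_self (rep_W' H2).
    by rewrite (inter_rep H1 H2 Hu (Lorbit_self (rep_W' H2))).
  rewrite Hor (card_imset_seq Hu2 Hinj) size_map; exact: Hsz.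
- move=> O; rewrite Hor => /imsetP [y /mapP [w Hw ->] ->]; exact: Oprops Hw.
rewrite Hor; apply/and3P; split.
- apply/eqP/setP => u; apply/bigcupP/idP.
    move=> [B /imsetP [y /mapP [w Hw ->] ->] Hu].
    move/(memO _ (rep_W' Hw)): Hu => [z [-> Hz]].
    apply/imsetP; exists z; last by [].
    rewrite inE inW; case: (ch1 (rep_W' Hw)) => _ Hs _; exact: sublP Hs _ Hz.
  move=> /imsetP [x Hx ->]; rewrite inE inW in Hx.
  case: (O_rep Hx) => w Hw E; exists (Lorbit (vpair (dec w))).
    by apply/imsetP; exists (dec w); [exact: (map_f dec Hw) | by []].
  rewrite -E; exact: Lorbit_self Hx.
- apply/trivIsetP => A B /imsetP [y1 /mapP [w1 H1 ->] ->] /imsetP [y2 /mapP [w2 H2 ->] ->] Hne.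
  rewrite -setI_eq0; apply/negPn/negP => /set0Pn [u /setIP [Hu1 Hu2]].
  by move: Hne; rewrite (inter_rep H1 H2 Hu1 Hu2) eqxx.
- apply/imsetP => [[y /mapP [w Hw ->] E]].
  by have := Lorbit_self (rep_W' Hw); rewrite -E inE.
Qed.
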